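(* If $f:A\to B$ and $g:B\to D$ are strict morphisms between objects of $\mathcal G$, then $g\circ f:A\to D$ is a strict morphism.
   Context: Let $\Lambda$ be a finite dimensional algebra over a field and $\mathrm{mod}\text-\Lambda$ the category of finitely generated right $\Lambda$-modules. Fix a torsion class $\mathcal G\subseteq\mathrm{mod}\text-\Lambda$, i.e. a class of modules closed under isomorphisms, extensions and quotients. For $B\in\mathcal G$, a subobject of $B$ is a submodule of $B$ that lies in $\mathcal G$. A subobject $A\subseteq B$ is a strict subobject if $A\cap B'\in\mathcal G$ for every subobject $B'$ of $B$. A strict morphism is a module homomorphism $f:A\to B$ with $A,B\in\mathcal G$ such that $\ker f\in\mathcal G$, $\ker f$ is a strict subobject of $A$, and $\operatorname{im} f$ is a strict subobject of $B$ (equivalently, $f$ is the composition of a surjection onto a strict quotient of $A$ followed by the inclusion of a strict subobject of $B$). *)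

(* Defs.v *)
From HB Require Import structures.
From mathcomp Require Import all_boot all_order all_algebra all_field.
Set Implicit Arguments. Unset Strict Implicit. Unset Printing Implicit Defensive.
Import GRing.Theory.
Local Open Scope ring_scope.

(* A finitely generated right Lambda-module is a finite dimensional K-space;
   we model it (up to isomorphism) as row vectors K^n with a right action
   v . a := v *m ract a, where ract : Lambda -> 'M_n is a unital,
   multiplicative, K-linear map.  Module homomorphisms are matrices
   f with v |-> v *m f commuting with the action; composition of
   f : A -> B and g : B -> D is f *m g. *)
Section Modules.
Variables (K : fieldType) (L : falgType K).

Record rmod := RMod {
  rdim : nat;
  ract : L -> 'M[K]_rdim;
  ract_lin : forall (k : K) (a b : L), ract (k *: a + b) = k *: ract a + ract b;
  ract1 : ract 1 = 1%:M;
  ractM : forall a b : L, ract (a * b) = ract a *m ract b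
}.

Definition is_hom (M N : rmod) (f : 'M[K]_(rdim M, rdim N)) : Prop :=
  forall a : L, ract M a *m f = f *m ract N a.

Definition is_submod (M : rmod) (r : nat) (U : 'M[K]_(r, rdim M)) : Prop :=
  forall a : L, (U *m ract M a <= U)%MS.

Definition torsion_class (G : rmod -> Prop) : Prop :=
  [/\ (forall (M N : rmod) (f : 'M[K]_(rdim M, rdim N)),
         is_hom f -> row_free f -> row_full f -> G M -> G N),
      (forall (M N : rmod) (f : 'M[K]_(rdim M, rdim N)),
         is_hom f -> row_full f -> G M -> G N) &
      (forall (M1 M M2 : rmod) (f : 'M[K]_(rdim M1, rdim M))
              (g : 'M[K]_(rdim M, rdim M2)),
         is_hom f -> is_hom g -> row_free f -> row_full g ->
         (f == kermx g)%MS -> G M1 -> G M2 -> G M)].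

Definition inG (G : rmod -> Prop) (M : rmod) (r : nat)
    (U : 'M[K]_(r, rdim M)) : Prop :=
  exists N : rmod, G N /\
    exists h : 'M[K]_(rdim N, rdim M),
      [/\ is_hom h, row_free h & (h == U)%MS].

Definition subobject (G : rmod -> Prop) (M : rmod) (r : nat)
    (U : 'M[K]_(r, rdim M)) : Prop :=
  is_submod U /\ inG G U.

Definition strict_subobject (G : rmod -> Prop) (M : rmod) (r : nat)
    (U : 'M[K]_(r, rdim M)) : Prop :=
  subobject G U /\
  forall (r' : nat) (B' : 'M[K]_(r', rdim M)),
    subobject G B' -> inG G (U :&: B')%MS.

Definition strict_morphism (G : rmod -> Prop) (A B : rmod)
    (f : 'M[K]_(rdim A, rdim B)) : Prop :=
  [/\ G A, G B, is_hom f,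
      inG G (kermx f) &
      (strict_subobject G (kermx f) /\ strict_subobject G f)].

End Modules.

(* Main.v *)
Require Import Defs.
From mathcomp Require Import all_boot all_order all_algebra all_field.
Set Implicit Arguments. Unset Strict Implicit. Unset Printing Implicit Defensive.
Import GRing.Theory.
Local Open Scope ring_scope.

Section S.
Variables (K : fieldType) (L : falgType K).
Implicit Types M N : rmod L.

Lemma rf_cancel m n p (B : 'M[K]_(n, p)) (X Y : 'M[K]_(m, n)) :
  row_free B -> X *m B = Y *m B -> X = Y.
Proof. by move=> /row_free_inj H; apply: H. Qed.

Section Sub.
Variables (M : rmod L) (r : nat) (U : 'M[K]_(r, rdim M)) (HU : is_submod U).
Let B := row_base U.
Definition sact (a : L) : 'M[K]_(\rank U) := B *m ract M a *m pinvmx B.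

Lemma sactE a : sact a *m B = B *m ract M a.
Proof.
rewrite /sact mulmxKpV //.
by rewrite (eqmxMr _ (eq_row_base U)) eq_row_base; apply: HU.
Qed.

Lemma sact_lin k a b : sact (k *: a + b) = k *: sact a + sact b.
Proof.
by rewrite /sact ract_lin mulmxDr mulmxDl -!scalemxAr -scalemxAl.
Qed.

Lemma sact1 : sact 1 = 1%:M.
Proof.
apply: (@rf_cancel _ _ _ B); first exact: row_base_free.
by rewrite sactE ract1 mulmx1 mul1mx.
Qed.

Lemma sactM a b : sact (a * b) = sact a *m sact b.
Proof.
apply: (@rf_cancel _ _ _ B); first exact: row_base_free.
by rewrite sactE ractM mulmxA -(sactE a) -mulmxA -[RHS]mulmxA (sactE b).
Qed.

Definition Sub := @RMod K L (\rank U) sact sact_lin sact1 sactM.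

Lemma Sub_hom : is_hom (M := Sub) (N := M) B.
Proof. by move=> a; rewrite /= sactE. Qed.
End Sub.

Lemma rf_of m n p (X : 'M[K]_(m, n)) (Y : 'M[K]_(n, p)) :
  row_free (X *m Y) -> row_free X.
Proof.
rewrite /row_free => /eqP H; rewrite eqn_leq rank_leq_row /=.
by rewrite -{1}H mxrankM_maxl.
Qed.

Lemma full_of m n p (X : 'M[K]_(m, n)) (Y : 'M[K]_(n, p)) :
  \rank (X *m Y) = n -> row_full X.
Proof.
move=> H; rewrite /row_full eqn_leq rank_leq_col /=.
by rewrite -{1}H mxrankM_maxl.
Qed.

Lemma rf_eq m n p (X : 'M[K]_(m, n)) (Y : 'M[K]_(p, n)) :
  row_free X -> (X :=: Y)%MS -> \rank Y = m.
Proof. by move=> /eqP H E; rewrite -E. Qed.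

Variable G : rmod L -> Prop.
Hypothesis HG : torsion_class G.

Lemma inG_eq M r s (U : 'M[K]_(r, rdim M)) (V : 'M[K]_(s, rdim M)) :
  (U :=: V)%MS -> inG G U -> inG G V.
Proof.
move=> E [N [GN [h [hh fh eh]]]]; exists N; split=> //; exists h; split=> //.
move/eqmxP: eh => eh; by apply/eqmxP; apply: eqmx_trans eh E.
Qed.

Lemma Sub_inG M r (U : 'M[K]_(r, rdim M)) (HU : is_submod U) :
  G (Sub HU) -> inG G U.
Proof.
move=> GS; exists (Sub HU); split=> //; exists (row_base U); split.
- exact: Sub_hom.
- exact: row_base_free.
- by apply/eqmxP; apply: eq_row_base.
Qed.

Lemma inG_Sub M r (U : 'M[K]_(r, rdim M)) (HU : is_submod U) :
  inG G U -> G (Sub HU).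
Proof.
case: HG => Hiso _ _.
move=> [N [GN [h [hh fh eh]]]].
have hU : (h <= row_base U)%MS by rewrite eq_row_base; case/andP: eh.
pose phi : 'M[K]_(rdim N, rdim (Sub HU)) := h *m pinvmx (row_base U).
have phiB : phi *m row_base U = h by rewrite mulmxKpV.
apply: (Hiso N (Sub HU) phi) => //.
- move=> a; apply: (@rf_cancel _ _ _ (row_base U)); first exact: row_base_free.
  by rewrite -mulmxA phiB -mulmxA (Sub_hom HU a) mulmxA phiB hh.
- by apply: (@rf_of _ _ _ phi (row_base U)); rewrite phiB.
- apply: (@full_of _ _ _ phi (row_base U)); rewrite phiB.
  by move/eqmxP: eh => ->.
Qed.

Lemma submod_img M N r (U : 'M[K]_(r, rdim M)) (h : 'M[K]_(rdim M, rdim N)) :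
  is_submod U -> is_hom h -> is_submod (U *m h).
Proof. by move=> HU hh a; rewrite -mulmxA -hh mulmxA; apply: submxMr; apply: HU. Qed.

Lemma submod_ker M N (h : 'M[K]_(rdim M, rdim N)) :
  is_hom h -> is_submod (kermx h).
Proof. by move=> hh a; rewrite sub_kermx -mulmxA hh mulmxA mulmx_ker mul0mx. Qed.

Lemma submod_cap M r s (U : 'M[K]_(r, rdim M)) (V : 'M[K]_(s, rdim M)) :
  is_submod U -> is_submod V -> is_submod (U :&: V)%MS.
Proof.
move=> HU HV a; rewrite sub_capmx; apply/andP; split.
- by apply: submx_trans (HU a); apply: submxMr; apply: capmxSl.
- by apply: submx_trans (HV a); apply: submxMr; apply: capmxSr.
Qed.

Lemma submod1 M : is_submod (1%:M : 'M[K]_(rdim M)).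
Proof. by move=> a; apply: submx1. Qed.

Lemma inG_img M N r (U : 'M[K]_(r, rdim M)) (h : 'M[K]_(rdim M, rdim N)) :
  is_submod U -> is_hom h -> inG G U -> inG G (U *m h).
Proof.
move=> HU hh GU; have HV := submod_img HU hh.
apply: (Sub_inG (HU:=HV)); have GS := inG_Sub HU GU.
case: HG => _ Hquo _.
pose BU := row_base U; pose BV := row_base (U *m h).
have sub : (BU *m h <= BV)%MS.
  by rewrite /BV eq_row_base; apply: submxMr; rewrite eq_row_base.
pose psi : 'M[K]_(rdim (Sub HU), rdim (Sub HV)) := BU *m h *m pinvmx BV.
have psiB : psi *m BV = BU *m h by rewrite mulmxKpV.
apply: (Hquo _ _ psi) => //.
- move=> a; apply: (@rf_cancel _ _ _ BV); first exact: row_base_free.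
  rewrite -mulmxA psiB -[RHS]mulmxA (Sub_hom HV a) mulmxA psiB.
  by rewrite mulmxA (Sub_hom HU a) -!mulmxA hh.
- apply: (@full_of _ _ _ psi BV); rewrite psiB.
  by rewrite (eqmxMr h (eq_row_base U)).
Qed.

Lemma inG_ext M N s (V : 'M[K]_(s, rdim M)) (h : 'M[K]_(rdim M, rdim N)) :
  is_submod V -> is_hom h -> inG G (V :&: kermx h)%MS -> inG G (V *m h) ->
  inG G V.
Proof.
move=> HV hh G1 G2.
have H1 := submod_cap HV (submod_ker hh).
have H2 := submod_img HV hh.
have GS1 := inG_Sub H1 G1; have GS2 := inG_Sub H2 G2.
apply: (Sub_inG (HU:=HV)).
case: HG => _ _ Hext.
pose B1 := row_base (V :&: kermx h)%MS; pose BV := row_base V;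
pose B2 := row_base (V *m h).
have s1 : (B1 <= BV)%MS.
  by rewrite /B1 /BV !eq_row_base capmxSl.
have s2 : (BV *m h <= B2)%MS.
  by rewrite /B2 eq_row_base; apply: submxMr; rewrite eq_row_base.
pose f1 : 'M[K]_(rdim (Sub H1), rdim (Sub HV)) := B1 *m pinvmx BV.
pose g1 : 'M[K]_(rdim (Sub HV), rdim (Sub H2)) := BV *m h *m pinvmx B2.
have f1B : f1 *m BV = B1 by rewrite mulmxKpV.
have g1B : g1 *m B2 = BV *m h by rewrite mulmxKpV.
have B1h : B1 *m h = 0.
  apply/sub_kermxP; rewrite /B1 eq_row_base; exact: capmxSr.
apply: (Hext (Sub H1) (Sub HV) (Sub H2) f1 g1) => //.
- move=> a; apply: (@rf_cancel _ _ _ BV); first exact: row_base_free.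
  rewrite -mulmxA f1B -[RHS]mulmxA (Sub_hom HV a) mulmxA f1B.
  by rewrite (Sub_hom H1 a).
- move=> a; apply: (@rf_cancel _ _ _ B2); first exact: row_base_free.
  rewrite -mulmxA g1B -[RHS]mulmxA (Sub_hom H2 a) mulmxA g1B.
  by rewrite mulmxA (Sub_hom HV a) -!mulmxA hh.
- by apply: (@rf_of _ _ _ f1 BV); rewrite f1B; apply: row_base_free.
- apply: (@full_of _ _ _ g1 B2); rewrite g1B.
  by rewrite (eqmxMr h (eq_row_base V)).
- apply/andP; split.
  + apply/sub_kermxP; apply: (@rf_cancel _ _ _ B2); first exact: row_base_free.
    by rewrite -mulmxA g1B mulmxA f1B B1h !mul0mx.
  + set Kg := kermx g1.
    have KB : (Kg *m BV <= B1)%MS.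
      rewrite /B1 eq_row_base sub_capmx; apply/andP; split.
      * by rewrite -/BV -(eq_row_base V); apply: submxMl.
      * apply/sub_kermxP; rewrite -mulmxA -g1B mulmxA mulmx_ker mul0mx //.
    have -> : Kg = Kg *m BV *m pinvmx B1 *m f1.
      apply: (@rf_cancel _ _ _ BV); first exact: row_base_free.
      by rewrite -[RHS]mulmxA f1B mulmxKpV.
    exact: (submxMl _ f1).
Qed.

Lemma cap_preim m n p k r (X : 'M[K]_(m, n)) (Q : 'M[K]_(k, n))
    (h : 'M[K]_(n, p)) (Z : 'M[K]_(r, p)) :
  (forall q (W : 'M[K]_(q, n)), (W <= Q)%MS = (W *m h <= Z)%MS) ->
  ((X :&: Q) *m h :=: X *m h :&: Z)%MS.
Proof.
move=> HQ; apply/eqmxP/andP; split.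
- rewrite sub_capmx; apply/andP; split.
  + by apply: submxMr; apply: capmxSl.
  + by rewrite -HQ capmxSr.
- set Y := (X *m h :&: Z)%MS.
  pose W := Y *m pinvmx (X *m h) *m X.
  have WY : W *m h = Y by rewrite -mulmxA mulmxKpV // capmxSl.
  rewrite -WY; apply: submxMr; rewrite sub_capmx; apply/andP; split.
  + exact: submxMl.
  + by rewrite HQ WY capmxSr.
Qed.

Lemma submod_hom M N (h : 'M[K]_(rdim M, rdim N)) : is_hom h -> is_submod h.
Proof. by move=> hh a; rewrite -hh submxMl. Qed.

Lemma inG1 M : G M -> inG G (1%:M : 'M[K]_(rdim M)).
Proof.
move=> GM; exists M; split=> //; exists 1%:M; split.
- by move=> a; rewrite mulmx1 mul1mx.
- by rewrite /row_free mxrank1.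
- by apply/andP; split; exact: submx_refl.
Qed.
End S.

Theorem mainTheorem4 (K : fieldType) (L : falgType K)
    (G : rmod L -> Prop) (HG : torsion_class G)
    (A B D : rmod L)
    (f : 'M[K]_(rdim A, rdim B)) (g : 'M[K]_(rdim B, rdim D)) :
  strict_morphism G f -> strict_morphism G g ->
  strict_morphism G (f *m g)%R.
Proof.
move=> [GA GB hf kf [skf sif]] [_ GD hg kg [skg sig]].
have hfg : is_hom (f *m g) by move=> a; rewrite mulmxA hf -mulmxA hg mulmxA.
have kerS : (kermx f <= kermx (f *m g))%MS.
  by rewrite sub_kermx mulmxA mulmx_ker mul0mx.
have Hker : forall r (A' : 'M[K]_(r, rdim A)), subobject G A' ->
    inG G (kermx (f *m g) :&: A')%MS.
  move=> r A' [HA' GA']; rewrite capmxC.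
  have HV := submod_cap HA' (submod_ker hfg).
  apply: (inG_ext HG (h := f) HV hf).
  - apply: (inG_eq _ (skf.2 _ A' (conj HA' GA'))).
    apply/eqmxP/andP; split; rewrite !sub_capmx.
    + by rewrite capmxSr capmxSl (submx_trans (capmxSl _ _) kerS).
    + by rewrite capmxSr (submx_trans (capmxSl _ _) (capmxSl _ _)).
  - apply: (inG_eq (eqmx_sym (cap_preim A' (h := f) (Q := kermx (f *m g))
                  (Z := kermx g) _))).
      by move=> q W; rewrite !sub_kermx mulmxA.
    rewrite capmxC; apply: skg.2; split.
    + exact: submod_img HA' hf.
    + exact: (inG_img HG HA' hf GA').
have Hk1 := Hker _ _ (conj (submod1 A) (inG1 GA)).
rewrite capmx1 in Hk1.
split=> //; split.
  by split=> //; split=> //; exact: submod_ker hfg.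
split.
  split; first exact: submod_img (submod_hom hf) hg.
  exact: (inG_img HG (submod_hom hf) hg sif.1.2).
move=> r D' [HD' GD'].
pose P := kermx (g *m cokermx D').
have HP : forall q (W : 'M[K]_(q, rdim B)), (W <= P)%MS = (W *m g <= D')%MS.
  by move=> q W; rewrite sub_kermx mulmxA -submxE.
have HPs : is_submod P.
  move=> a; rewrite HP -mulmxA hg mulmxA; apply: submx_trans (HD' a).
  by apply: submxMr; rewrite -HP submx_refl.
have GP : inG G P.
  apply: (inG_ext HG (h := g) HPs hg).
  - apply: (inG_eq _ kg); apply/eqmxP/andP; split.
    + rewrite sub_capmx submx_refl andbT HP.
      by move/sub_kermxP: (submx_refl (kermx g)) => ->; rewrite sub0mx.
    + exact: capmxSr.
  - have E := cap_preim (1%:M : 'M[K]_(rdim B)) HP.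
    rewrite capmxC capmx1 mul1mx in E.
    exact: inG_eq (eqmx_sym E) (sig.2 _ D' (conj HD' GD')).
have E := cap_preim f HP.
apply: (inG_eq E).
apply: (inG_img HG (U := (f :&: P)%MS) (submod_cap (submod_hom hf) HPs) hg).
exact: sif.2 _ P (conj HPs GP).
Qed.
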